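(* Let $d$ be a positive integer and let $(A_{R,n})_{R,n\in\mathbb{N}}$ be a two-parameter sequence in a normed space with $\|A_{R,n}\|\le1$ for all $R,n$. Let $L\in\mathcal{H}$ be eventually positive with $1\prec L(t)\prec t$, and assume that for some $C>0$, $$\limsup_{R\to+\infty}\mathop{\mathbb{E}}_{1\le r\le R}\Big\|\mathop{\mathbb{E}}_{r\le n\le r+L(r)}A_{R,n}\Big\|^d\le C.$$ Then $\limsup_{R\to+\infty}\big\|\mathop{\mathbb{E}}_{1\le n\le R}A_{R,n}\big\|\le C^{1/d}$.
   Context: $\mathcal{H}$ is a fixed Hardy field (subfield of germs at $+\infty$ of real functions, closed under differentiation) containing the logarithmico-exponential functions, closed under composition and compositional inversion. $f\prec g$ means $f(t)/g(t)\to0$. $\mathbb{E}_{1\le n\le x}a(n)=\frac{1}{\lfloor x\rfloor}\sum_{n=1}^{\lfloor x\rfloor}a(n)$, and $\mathbb{E}_{r\le n\le r+L(r)}$ denotes the average over the integers $n$ in $[r,r+L(r)]$. *)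

(* Defs.v *)
From HB Require Import structures.
From mathcomp Require Import all_boot all_order all_algebra.
From mathcomp Require Import all_classical all_reals all_analysis.
Set Implicit Arguments. Unset Strict Implicit. Unset Printing Implicit Defensive.
Import Order.TTheory GRing.Theory Num.Theory.
Import numFieldNormedType.Exports.
Local Open Scope classical_set_scope.
Local Open Scope ring_scope.

Section Defs.
Variable R : realType.

Definition ev (P : R -> Prop) : Prop := \forall x \near +oo, P x.

(* Logarithmico-exponential functions (Hardy): built from the identity and
   real constants with field operations, exp and log. *)
Inductive LEfun : (R -> R) -> Prop :=
| LE_id : LEfun (fun x => x)
| LE_cst (c : R) : LEfun (fun _ => c)
| LE_add f g : LEfun f -> LEfun g -> LEfun (fun x => f x + g x)
| LE_opp f : LEfun f -> LEfun (fun x => - f x)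
| LE_mul f g : LEfun f -> LEfun g -> LEfun (fun x => f x * g x)
| LE_inv f : LEfun f -> ev (fun x => f x != 0) -> LEfun (fun x => (f x)^-1)
| LE_exp f : LEfun f -> LEfun (fun x => expR (f x))
| LE_ln f : LEfun f -> ev (fun x => 0 < f x) -> LEfun (fun x => ln (f x)).

(* H is a set of germs at +oo (represented by total functions, closed under
   eventual equality) forming a Hardy field: a subfield of the ring of germs
   closed under differentiation. *)
Definition hardy_field (H : set (R -> R)) : Prop :=
  [/\ (forall f g, H f -> ev (fun x => f x = g x) -> H g),
      H (fun _ => 0) /\ H (fun _ => 1),
      (forall f g, H f -> H g -> H (fun x => f x - g x)),
      (forall f g, H f -> H g -> H (fun x => f x * g x)) &
      (forall f, H f -> ~ ev (fun x => f x = 0) ->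
         exists2 g, H g & ev (fun x => f x * g x = 1))] /\
  (forall f, H f -> ev (fun x => derivable f x 1) /\ H (derive1 f)).

Definition standing_hardy (H : set (R -> R)) : Prop :=
  [/\ hardy_field H,
      (forall f, LEfun f -> H f),
      (forall f g, H f -> H g -> g x @[x --> +oo] --> +oo -> H (f \o g)) &
      (forall g, H g -> g x @[x --> +oo] --> +oo ->
         exists2 h, H h & [/\ h x @[x --> +oo] --> +oo,
                              ev (fun x => g (h x) = x) &
                              ev (fun x => h (g x) = x)])].

End Defs.

Section Avg.
Variables (R : realType) (V : normedModType R).

(* E_{1<=n<=N} a(n) = (1/N) sum_{n=1}^N a(n)  (0 when N = 0) *)
Definition avg1 (N : nat) (a : nat -> V) : V :=
  (N%:R)^-1 *: \sum_(1 <= n < N.+1) a n.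

(* E_{r<=n<=r+L(r)} a(n): average over the integers n in [r, r + L(r)]
   (0 if there is none). *)
Definition avg_window (L : R -> R) (r : nat) (a : nat -> V) : V :=
  let N := (r + Num.truncn (L r%:R)).+1 in
  ((\sum_(r <= n < N | n%:R <= r%:R + L r%:R) 1%N)%:R)^-1 *:
    \sum_(r <= n < N | n%:R <= r%:R + L r%:R) a n.

End Avg.

Definition prec (R : realType) (f g : R -> R) : Prop :=
  (f x / g x) @[x --> +oo] --> 0.

(* Main.v *)
Require Import Defs.
From HB Require Import structures.
From mathcomp Require Import all_boot all_order all_algebra.
From mathcomp Require Import all_classical all_reals all_analysis.
From mathcomp Require Import ring lra zify.
Import Order.TTheory GRing.Theory Num.Theory Num.Def.
Import numFieldNormedType.Exports.
Local Open Scope classical_set_scope.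
Local Open Scope ring_scope.
Set Implicit Arguments. Unset Strict Implicit. Unset Printing Implicit Defensive.
Section LS.
Context {R : realType}.
Local Open Scope ereal_scope.

Lemma limn_esupE (u : (\bar R)^nat) : limn_esup u = ereal_inf (range (esups u)).
Proof. by rewrite limn_esup_lim; apply/cvg_lim => //; exact: cvg_esups_inf. Qed.

Lemma esup_lt_ev (u : (\bar R)^nat) x : limn_esup u < x ->
  exists N, forall n, (N <= n)%N -> u n < x.
Proof.
rewrite limn_esupE => /ereal_inf_lt [_ [N _ <-]] hN.
exists N => n Nn; apply: le_lt_trans hN.
by apply: ereal_sup_ubound; exists n.
Qed.

Lemma ev_le_esup (u : (\bar R)^nat) x : (exists N, forall n, (N <= n)%N -> u n <= x) ->
  limn_esup u <= x.
Proof.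
move=> [N hN]; rewrite limn_esupE; apply: (@le_trans _ _ (esups u N)).
  by apply: ereal_inf_lbound; exists N.
by apply: ge_ereal_sup => _ [n /= Nn <-]; exact: hN.
Qed.
End LS.

Section HF.
Context {R : realType}.

Lemma evP (P : R -> Prop) : ev P <-> exists M, forall x, M < x -> P x.
Proof.
split; first by move=> [M [_ h]]; exists M.
by move=> [M h]; exists M; split => //; exact: num_real.
Qed.

Lemma ev_and (P Q : R -> Prop) : ev P -> ev Q -> exists M, forall x, M < x -> P x /\ Q x.
Proof.
move=> /evP [M1 h1] /evP [M2 h2]; exists (maxr M1 M2) => x.
by rewrite gt_max => /andP [a b]; split; [exact: h1|exact: h2].
Qed.

Lemma cont_of_der (f : R -> R) T a b : (forall x, T < x -> derivable f x 1) -> T < a ->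
  {within `[a, b], continuous f}.
Proof.
move=> hd Ta; apply: continuous_in_subspaceT => z; rewrite inE /= in_itv /= => /andP [az _].
apply/differentiable_continuous/derivable1_diffP; apply: hd; exact: lt_le_trans az.
Qed.

Lemma mvt (f : R -> R) T a b : (forall x, T < x -> derivable f x 1) -> T < a -> a <= b ->
  exists c, [/\ T < c, a <= c, c <= b & f b - f a = derive1 f c * (b - a)].
Proof.
move=> hd Ta ab.
have H1 : forall x, x \in `]a, b[%R -> is_derive x 1 f (derive1 f x).
  move=> x; rewrite in_itv /= => /andP [ax _]; rewrite derive1E.
  apply: derivableP; apply: hd; exact: lt_trans ax.
have [c] := @MVT_segment R f (derive1 f) a b ab H1 (cont_of_der (b:=b) hd Ta).
rewrite in_itv /= => /andP [ac cb] e; exists c; split => //; exact: lt_le_trans ac.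
Qed.

Lemma sign_const (f : R -> R) T : (forall x, T < x -> derivable f x 1 /\ f x != 0) ->
  forall x y, T < x -> T < y -> f x < 0 -> 0 < f y -> False.
Proof.
move=> h.
have key : forall a b, T < a -> a <= b -> f a * f b < 0 -> False.
  move=> a b Ta ab hab.
  have hd : forall x, T < x -> derivable f x 1 by move=> x /h [].
  have hv : minr (f a) (f b) <= 0 <= maxr (f a) (f b).
    rewrite ge_min le_max.
    have [fa0|fa0] := ltP (f a) 0.
      by rewrite (ltW fa0) /=; move: hab; rewrite nmulr_rlt0 // => /ltW ->.
    have fa0' : 0 < f a by rewrite lt_neqAle eq_sym (h a Ta).2 fa0.
    by move: hab; rewrite pmulr_rlt0 // => /ltW ->; rewrite orbT.
  have [c] := @IVT R f a b 0 ab (cont_of_der (b:=b) hd Ta) hv.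
  rewrite in_itv /= => /andP [ac _] fc.
  by have := (h c (lt_le_trans Ta ac)).2; rewrite fc eqxx.
move=> x y Tx Ty fx fy.
have hxy : f x * f y < 0 by rewrite nmulr_rlt0.
have [xy|yx] := leP x y; first exact: key Tx xy hxy.
by apply: (key y x Ty (ltW yx)); rewrite mulrC.
Qed.

Lemma hf_sign (H : set (R -> R)) f : hardy_field H -> H f ->
  exists T, exists s : R, `|s| = 1 /\ forall x, T < x -> 0 <= s * f x.
Proof.
move=> [[_ _ _ _ hinv] hder] Hf.
have [/evP [M hM]|nz] := pselect (ev (fun x => f x = 0)).
  by exists M, 1; split; [rewrite normr1|move=> x /hM ->; rewrite mulr0].
have [g _ hg] := hinv f Hf nz.
have [T hT] := ev_and ((hder f Hf).1) hg.
have h : forall x, T < x -> derivable f x 1 /\ f x != 0.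
  move=> x /hT [d e]; split => //; apply/eqP => f0; move: e; rewrite f0 mul0r.
  by move/eqP; rewrite eq_sym oner_eq0.
have T1 : T < T + 1 by rewrite ltrDl.
have [fn|fp] := ltP (f (T + 1)) 0.
  exists T, (-1); split; first by rewrite normrN normr1.
  move=> x Tx; rewrite mulN1r oppr_ge0; rewrite leNgt; apply/negP => fx.
  exact: (sign_const h T1 Tx fn fx).
exists T, 1; split; first by rewrite normr1.
have fp' : 0 < f (T + 1) by rewrite lt_neqAle eq_sym (h _ T1).2 fp.
move=> x Tx; rewrite mul1r leNgt; apply/negP => fx.
exact: (sign_const h Tx T1 fx fp').
Qed.

Lemma core (L : R -> R) T c s : (forall x, T < x -> derivable L x 1) ->
  prec L (fun t => t) -> 0 < c -> `|s| = 1 ->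
  (forall x, T < x -> c <= s * derive1 L x) -> False.
Proof.
move=> hd hp c0 s1 hc.
move/cvgr0Pnorm_lt: hp => /(_ (c / 2)) /=.
have c2 : 0 < c / 2 by rewrite divr_gt0.
move=> /(_ c2) /evP [M hM].
set y := maxr (maxr T M) 0 + 1.
have Ty : T < y by rewrite /y ltr_pwDr // !le_max lexx.
have My : M < y by rewrite /y ltr_pwDr // !le_max lexx orbT.
have y0 : 0 < y by rewrite /y ltr_pwDr // !le_max lexx orbT.
set K := `|L y|.
set x := 2 * K / c + 2 * y + 1.
have K0 : 0 <= K by rewrite /K.
have yx : y <= x.
  rewrite /x; have : 0 <= 2 * K / c by rewrite divr_ge0 // ?mulr_ge0 // ltW.
  move: y0; lra.
have [xi [Txi yxi xix e]] := mvt hd Ty yx.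
have h1 : c * (x - y) <= s * (L x - L y).
  rewrite e mulrA; apply: ler_wpM2r; first by rewrite subr_ge0.
  by rewrite hc // (lt_le_trans Ty yxi).
have h2 : s * L x <= `|L x| by rewrite (le_trans (ler_norm _)) // normrM s1 mul1r.
have h3 : - (s * L y) <= `|L y| by rewrite (le_trans (ler_norm _)) // normrN normrM s1 mul1r.
have x0 : 0 < x by exact: lt_le_trans yx.
have h4 : `|L x| < c / 2 * x.
  have := hM x (lt_le_trans My yx); rewrite normrM normfV (gtr0_norm x0).
  by rewrite ltr_pdivrMr.
have h5 : c * x = 2 * K + 2 * (c * y) + c.
  rewrite /x !mulrDr mulrCA mulfV ?mulr1; first by ring.
  exact: lt0r_neq0.
have h6 : c * (x - y) = c * x - c * y by ring.
have h7 : c / 2 * x = (c * x) / 2 by ring.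
have hK : K = `|L y| by [].
clearbody x K y.
have h8 : s * (L x - L y) = s * L x - s * L y by ring.
lra.
Qed.

Lemma D_small (H : set (R -> R)) L : hardy_field H -> H L -> prec L (fun t => t) ->
  forall eps, 0 < eps -> exists T, (forall x, T < x -> derivable L x 1) /\
     forall x, T < x -> `|derive1 L x| <= eps.
Proof.
move=> hH HL hp eps e0.
have hder := hH.2.
have [/evP [T1 h1] HD] := hder L HL.
have [/evP [T2 h2] HD'] := hder _ HD.
have [T3 [s [s1 h3]]] := hf_sign hH HD'.
set T := maxr (maxr T1 T2) T3.
have T1T : T1 <= T by rewrite /T !le_max lexx.
have T2T : T2 <= T by rewrite /T !le_max lexx orbT.
have T3T : T3 <= T by rewrite /T !le_max lexx orbT.
have hd : forall x, T < x -> derivable L x 1 by move=> x Tx; apply: h1; exact: le_lt_trans Tx.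
have hdD : forall x, T < x -> derivable (derive1 L) x 1.
  by move=> x Tx; apply: h2; exact: le_lt_trans Tx.
have mono : forall x y, T < x -> x <= y -> s * derive1 L x <= s * derive1 L y.
  move=> x y Tx xy; have [c [Tc _ _ e]] := mvt hdD Tx xy.
  rewrite -subr_ge0 -mulrBr e mulrA mulr_ge0 //; last by rewrite subr_ge0.
  by apply: h3; exact: le_lt_trans Tc.
have ub : forall x, T < x -> s * derive1 L x <= eps.
  move=> x0 Tx0; rewrite leNgt; apply/negP => hx0.
  apply: (core (T := x0) (c := eps) (s := s)) hp e0 s1 _.
    by move=> x /(lt_trans Tx0); exact: hd.
  move=> x /ltW x0x; apply: (le_trans (ltW hx0)); exact: mono.
have [M hM] : exists M, forall x, M < x -> - eps <= s * derive1 L x.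
  apply: contrapT => hn.
  apply: (core (T := T) (c := eps) (s := - s)) hp e0 _ _.
  - exact: hd.
  - by rewrite normrN.
  move=> y Ty; rewrite mulNr lerNr.
  apply: contrapT => hy; apply: hn; exists y => x yx.
  apply: contrapT => hx; apply: hy.
  apply: (le_trans (mono _ _ Ty (ltW yx))); rewrite ltW //.
  by rewrite ltNge; apply/negP.
exists (maxr T M); split.
  by move=> x; rewrite gt_max => /andP [Tx _]; exact: hd.
move=> x; rewrite gt_max => /andP [Tx Mx].
have := ub x Tx; have := hM x Mx.
rewrite -[`|derive1 L x|]mul1r -s1 -normrM.
move: (s * derive1 L x) => z; by rewrite ler_norml => -> ->.
Qed.

Lemma lipschitz (H : set (R -> R)) L : hardy_field H -> H L -> prec L (fun t => t) ->
  forall eps, 0 < eps -> exists T, forall x y, T < x -> T < y ->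
    `|L x - L y| <= eps * `|x - y|.
Proof.
move=> hH HL hp eps e0.
have [T [hd hs]] := D_small hH HL hp e0.
exists T.
have key : forall x y, T < y -> y <= x -> `|L x - L y| <= eps * `|x - y|.
  move=> x y Ty yx; have [c [Tc _ _ e]] := mvt hd Ty yx.
  rewrite e normrM ler_wpM2r //; exact: hs.
move=> x y Tx Ty; have [yx|xy] := leP y x; first exact: key.
by rewrite distrC (distrC x); apply: key => //; exact: ltW.
Qed.
End HF.

Section Comb.
Context {R : realType}.

Definition ind (m k n : nat) : R := if (m <= n)%N && (n < k)%N then 1 else 0.

Lemma ind_ge0 m k n : 0 <= ind m k n.
Proof. by rewrite /ind; case: ifP. Qed.

Lemma ind_le1 m k n : ind m k n <= 1.
Proof. by rewrite /ind; case: ifP. Qed.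

Lemma sum_ind (V : lmodType R) (a : nat -> V) m k M : (k <= M)%N ->
  \sum_(m <= n < k) a n = \sum_(0 <= n < M) ind m k n *: a n.
Proof.
move=> kM; rewrite [RHS](big_cat_nat _ (n := k)) //=.
rewrite [X in _ = _ + X]big_nat_cond [X in _ = _ + X]big1 ?addr0; last first.
  move=> i /andP [/andP [hi _] _]; rewrite /ind.
  by rewrite (leq_gtF hi) andbF scale0r.
have [mk|km] := leqP m k; last first.
  rewrite big_geq ?(ltnW km) //; rewrite big_nat_cond big1 // => i /andP [/andP [_ hi] _].
  by rewrite /ind leqNgt (ltn_trans hi km) /= scale0r.
rewrite [RHS](big_cat_nat _ (n := m)) //=.
rewrite [X in _ = X + _]big_nat_cond [X in _ = X + _]big1 ?add0r; last first.
  by move=> i /andP [/andP [_ hi] _]; rewrite /ind leqNgt hi /= scale0r.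
apply: eq_big_nat => i /andP [hm hk]; by rewrite /ind hm hk scale1r.
Qed.

Lemma sum_filt (V : Type) (idx : V) (op : V -> V -> V) (F : nat -> V) (P : pred nat) m k :
  (forall n, (m <= n < k)%N -> P n) ->
  \big[op/idx]_(m <= n < k | P n) F n = \big[op/idx]_(m <= n < k) F n.
Proof.
move=> hP; rewrite big_nat_cond [RHS]big_nat_cond; apply: eq_bigl => n.
by case h: (m <= n < k)%N => //=; rewrite hP.
Qed.

Lemma sum_sub_nat (F : nat -> R) m1 m2 k1 k2 : (m1 <= m2)%N -> (m2 <= k2)%N -> (k2 <= k1)%N ->
  (forall n, 0 <= F n) ->
  \sum_(m2 <= n < k2) F n <= \sum_(m1 <= n < k1) F n.
Proof.
move=> h1 h2 h3 hF.
rewrite [X in _ <= X](@big_cat_nat _ _ _ m2) //=; last exact: leq_trans h2 h3.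
rewrite [X in _ <= _ + X](@big_cat_nat _ _ _ k2) //=.
rewrite addrCA lerDl addr_ge0 // sumr_ge0 // => i _; exact: hF.
Qed.

Definition tr (L : R -> R) (r : nat) : nat := Num.truncn (L r%:R).

Lemma tr_le (L : R -> R) r : 0 <= L r%:R -> (tr L r)%:R <= L r%:R.
Proof. by move=> h; rewrite /tr truncn_le. Qed.

Lemma tr_gt (L : R -> R) r : L r%:R < (tr L r)%:R + 1.
Proof.
have := leqnn (tr L r); rewrite /tr truncn_le_nat => h.
by rewrite -natr1 in h.
Qed.

Lemma avg_windowE (V : normedModType R) (L : R -> R) r (a : nat -> V) :
  0 <= L r%:R ->
  avg_window L r a = ((tr L r).+1%:R)^-1 *: \sum_(r <= n < (r + tr L r).+1) a n.
Proof.
move=> L0; rewrite /avg_window -/(tr L r).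
have hP : forall n, (r <= n < (r + tr L r).+1)%N -> n%:R <= r%:R + L r%:R.
  move=> n /andP [_ hn]; rewrite -ltnS in hn.
  apply: (@le_trans _ _ (r%:R + (tr L r)%:R)); last by rewrite lerD2l tr_le.
  by rewrite -natrD ler_nat -ltnS.
rewrite (@sum_filt nat 0%N addn) // sum_filt // sum_nat_const_nat muln1.
by rewrite subSn ?leq_addr // addKn sum_filt.
Qed.

Lemma exch (V : lmodType R) (a : nat -> V) (t : nat -> nat) (wt : nat -> R) r0 Rr M :
  (forall r, (r <= Rr)%N -> ((r + t r).+1 <= M)%N) ->
  \sum_(r0 <= r < Rr.+1) wt r *: \sum_(r <= n < (r + t r).+1) a n =
  \sum_(0 <= n < M) (\sum_(r0 <= r < Rr.+1) wt r * ind r (r + t r).+1 n) *: a n.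
Proof.
move=> hM.
rewrite (eq_big_nat _ _ (F2 := fun r => \sum_(0 <= n < M) (wt r * ind r (r + t r).+1 n) *: a n)); last first.
  move=> r /andP [_ hr]; rewrite (sum_ind _ _ (hM r _)) ?scaler_sumr; last by rewrite -ltnS.
  by apply: eq_bigr => n _; rewrite scalerA.
rewrite exchange_big /=; apply: eq_bigr => n _; by rewrite scaler_suml.
Qed.

Lemma bound_exists (f : nat -> nat) Rr : exists M, forall r, (r <= Rr)%N -> (f r <= M)%N.
Proof.
elim: Rr => [|Rr [M hM]].
  by exists (f 0%N) => r; rewrite leqn0 => /eqP ->.
exists (maxn M (f Rr.+1)) => r; rewrite leq_eqVlt => /orP [/eqP ->|hr].
  by rewrite leq_maxr.
by rewrite leq_max hM.
Qed.

Lemma main_bound (V : normedModType R) (a : nat -> V) (L : R -> R) r0 N0 Rr eta :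
  (forall n, `|a n| <= 1) -> (0 < r0)%N -> (r0 <= N0)%N -> (N0 <= Rr)%N -> 0 <= eta ->
  (forall r, (r0 <= r)%N -> 0 <= L r%:R) ->
  (forall n, (N0 <= n <= Rr)%N -> 1 - eta <=
     \sum_(r0 <= r < Rr.+1) ((tr L r).+1%:R)^-1 * ind r (r + tr L r).+1 n) ->
  `|\sum_(1 <= n < Rr.+1) a n| <=
    \sum_(1 <= r < Rr.+1) `|avg_window L r a| + (1 + 2 * N0%:R + 2 * eta * Rr%:R).
Proof.
move=> ha r00 r0N0 N0R eta0 hL hc.
set wt := fun r => ((tr L r).+1%:R)^-1 : R.
set c := fun n => \sum_(r0 <= r < Rr.+1) wt r * ind r (r + tr L r).+1 n.
have [M0 hM0] := bound_exists (fun r => (r + tr L r).+1) Rr.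
set M := maxn M0 Rr.+1.
have hM : forall r, (r <= Rr)%N -> ((r + tr L r).+1 <= M)%N.
  by move=> r hr; rewrite leq_max hM0.
have RM : (Rr.+1 <= M)%N by rewrite leq_maxr.
have eW : \sum_(r0 <= r < Rr.+1) avg_window L r a = \sum_(0 <= n < M) c n *: a n.
  rewrite -exch //; apply: eq_big_nat => r /andP [hr _]; rewrite avg_windowE //; exact: hL.
have eS : \sum_(1 <= n < Rr.+1) a n = \sum_(0 <= n < M) ind 1 Rr.+1 n *: a n.
  exact: sum_ind.
have c0 : forall n, 0 <= c n.
  move=> n; apply: sumr_ge0 => r _; apply: mulr_ge0; last exact: ind_ge0.
  by rewrite invr_ge0.
have sc : \sum_(0 <= n < M) c n = (Rr.+1 - r0)%:R.
  have := @exch R (fun _ => (1 : R)) (tr L) wt r0 Rr M hM.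
  under [in X in X = _ -> _]eq_bigr do rewrite sumr_const_nat.
  under [in X in _ = X -> _]eq_bigr do rewrite -[_ *: 1]/(_ * 1) mulr1.
  move=> <-; rewrite -sumr_const_nat; apply: eq_big_nat => r _.
  by rewrite subSn ?leq_addr // addKn /wt -[_ *: _]/(_ * _) mulVf.
have se : \sum_(0 <= n < M) ind 1 Rr.+1 n = Rr%:R.
  have := sum_ind (fun _ => (1 : R)) 1 RM; rewrite sumr_const_nat subn1 /=.
  by under [in X in _ = X -> _]eq_bigr do rewrite -[_ *: 1]/(_ * 1) mulr1; move=> <-.
have sb : \sum_(0 <= n < M) ind 0 N0 n = N0%:R.
  have := sum_ind (fun _ => (1 : R)) 0 (leq_trans (leq_trans N0R (leqnSn _)) RM).
  rewrite sumr_const_nat subn0 /=.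
  by under [in X in _ = X -> _]eq_bigr do rewrite -[_ *: 1]/(_ * 1) mulr1; move=> <-.
have pw : forall n, `|ind 1 Rr.+1 n - c n| <=
    (c n - ind 1 Rr.+1 n) + 2 * (ind 0 N0 n + eta * ind 1 Rr.+1 n).
  move=> n; have := c0 n; rewrite /ind.
  case: (boolP ((1 <= n)%N && (n < Rr.+1)%N)) => [/andP [n1 nR]|_]; last first.
    rewrite sub0r normrN => h; rewrite ger0_norm // subr0 mulr0 addr0.
    by rewrite lerDl mulr_ge0 //; case: ifP.
  rewrite mulr1 /= => h; case: (leqP N0 n) => [N0n|nN0].
    have := hc n; rewrite N0n /= -ltnS nR => /(_ isT) hcn.
    have hcn' : 1 - eta <= c n := hcn.
    have [c1|c1] := leP 1 (c n).
      by rewrite ler0_norm ?subr_le0 // opprB lerDl mulr_ge0 // add0r.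
    rewrite gtr0_norm ?subr_gt0 //; lra.
  have [c1|c1] := leP 1 (c n).
    by rewrite ler0_norm ?subr_le0 // opprB lerDl mulr_ge0 // addr_ge0.
  rewrite gtr0_norm ?subr_gt0 //; lra.
have hSW : `|\sum_(1 <= n < Rr.+1) a n - \sum_(r0 <= r < Rr.+1) avg_window L r a|
    <= 1 + 2 * N0%:R + 2 * eta * Rr%:R.
  rewrite eS eW -sumrB.
  apply: (le_trans (ler_norm_sum _ _ _)).
  apply: (@le_trans _ _ (\sum_(0 <= n < M) `|ind 1 Rr.+1 n - c n|)).
    apply: ler_sum => n _; rewrite -scalerBl normrZ.
    by rewrite -[X in _ <= X]mulr1 ler_wpM2l.
  apply: (le_trans (ler_sum _ (fun n _ => pw n))).
  rewrite big_split /= sumrB -mulr_sumr big_split /= -mulr_sumr sc se sb.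
  have : (Rr.+1 - r0)%:R <= (Rr.+1)%:R :> R by rewrite ler_nat leq_subr.
  rewrite -natr1; lra.
have hW : `|\sum_(r0 <= r < Rr.+1) avg_window L r a| <= \sum_(1 <= r < Rr.+1) `|avg_window L r a|.
  apply: (le_trans (ler_norm_sum _ _ _)).
  apply: sum_sub_nat => //; first exact: (leq_trans r0N0 (leq_trans N0R (leqnSn _))).
set S := \sum_(1 <= n < Rr.+1) a n.
set W := \sum_(r0 <= r < Rr.+1) avg_window L r a.
have : `|S| <= `|W| + `|S - W|.
  by rewrite -{1}(subrK W S) addrC; apply: ler_normD.
move: hSW hW; rewrite -/S -/W; lra.
Qed.

Lemma ar1 (eps l : R) : 0 < eps -> eps <= 1/4 -> 1 <= eps * l -> 4 <= l.
Proof. move=> *; nra. Qed.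

Lemma ar2 (eps l : R) : 0 < eps -> eps <= 1/4 -> 4 <= l -> 0 <= (1 - eps) * l - 1.
Proof. move=> *; nra. Qed.

Lemma ar3 (eps l k : R) : 0 < eps -> eps <= 1/4 -> 1 <= eps * l ->
  (1 - eps) * l - 1 < k + 1 -> 0 < (1 + eps) * l + 1 ->
  1 - 4 * eps <= (k + 1) / ((1 + eps) * l + 1).
Proof.
move=> e0 e4 el hk D0; rewrite ler_pdivlMr //.
have hu : eps <= eps * (eps * l) by rewrite -[X in X <= _]mulr1 ler_pM2l.
have -> : (1 - 4 * eps) * ((1 + eps) * l + 1) = l - 3 * (eps * l) - 4 * (eps * (eps * l)) + 1 - 4 * eps.
  by ring.
have e2 : (1 - eps) * l - 1 = l - eps * l - 1 by ring.
rewrite e2 in hk.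
lra.
Qed.

Lemma c_lower (L : R -> R) T eps Rr n :
  0 < eps -> eps <= 1/4 -> 0 <= T ->
  (forall x y, T < x -> T < y -> `|L x - L y| <= eps * `|x - y|) ->
  (forall x, T < x -> 1 / eps <= L x /\ 2 * L x <= x) ->
  (2 * (Num.truncn T).+1 <= n)%N -> (n <= Rr)%N ->
  1 - 4 * eps <= \sum_((Num.truncn T).+1 <= r < Rr.+1)
      ((tr L r).+1%:R)^-1 * ind r (r + tr L r).+1 n.
Proof.
move=> e0 e4 T0 hlip hx r0n nR.
set r0 := (Num.truncn T).+1.
have Tr0 : T < r0%:R by have := leqnn (Num.truncn T); rewrite truncn_le_nat.
have r0n' : (r0 <= n)%N by rewrite /r0; clear -r0n; lia.
have Tn : T < n%:R by apply: (lt_le_trans Tr0); rewrite ler_nat.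
set l := L n%:R.
have [l1 l2] := hx _ Tn; rewrite -/l in l1 l2.
have epsl : 1 <= eps * l by rewrite -ler_pdivrMl // mulr1; move: l1; rewrite div1r.
have l4 : 4 <= l := ar1 e0 e4 epsl.
have pos : 0 <= (1 - eps) * l - 1 := ar2 e0 e4 l4.
have el0 : 0 <= eps * l by apply: le_trans epsl.
have eL : (1 - eps) * l = l - eps * l by ring.
set k := Num.truncn ((1 - eps) * l - 1).
have hk1 : k%:R <= (1 - eps) * l - 1 by rewrite truncn_le.
have hk2 : (1 - eps) * l - 1 < k%:R + 1.
  by have := leqnn k; rewrite /k {2}/Num.truncn truncn_le_nat -natr1.
have kl : k%:R <= l by move: hk1; rewrite eL; lra.
have k2n : (2 * k <= n)%N.
  by rewrite -(ler_nat R) natrM; apply: (le_trans _ l2); rewrite ler_pM2l.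
have r0n2 : (2 * r0 <= n)%N := r0n.
have r0nk : (r0 <= n - k)%N by clearbody k r0; clear -r0n2 k2n; lia.
set D := (1 + eps) * l + 1.
have eD : D = l + eps * l + 1 by rewrite /D; ring.
have D0 : 0 < D by rewrite eD; lra.
apply: (@le_trans _ _ (\sum_(n - k <= r < n.+1) D^-1)); last first.
  set F := fun r => ((tr L r).+1%:R)^-1 * ind r (r + tr L r).+1 n.
  have hF : forall r, 0 <= F r.
    by move=> r; apply: mulr_ge0; [rewrite invr_ge0|exact: ind_ge0].
  have hs : (n - k <= n.+1)%N by rewrite leqW // leq_subr.
  apply: (le_trans _ (@sum_sub_nat F r0 (n - k) Rr.+1 n.+1 r0nk hs nR hF)).
  apply: ler_sum_nat => r /andP [hr1 hr2].
  have rn : (r <= n)%N by rewrite -ltnS.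
  have Tr : T < r%:R by apply: (lt_le_trans Tr0); rewrite ler_nat (leq_trans r0nk).
  have dr : (n - r)%:R <= k%:R :> R by rewrite ler_nat; clearbody k; clear -hr1; lia.
  have hl := hlip _ _ Tr Tn; rewrite -/l (distrC r%:R) -natrB // normr_nat in hl.
  have [lr1 _] := hx _ Tr.
  have Lr0 : 0 <= L r%:R by apply: le_trans lr1; rewrite divr_ge0 // ltW.
  have t1 := tr_le Lr0; have t2 := tr_gt L r.
  have hlr : `|L r%:R - l| <= eps * k%:R by apply: (le_trans hl); rewrite ler_pM2l.
  move: hlr; rewrite ler_norml => /andP [hlr1 hlr2].
  have ekl : eps * k%:R <= eps * l by rewrite ler_pM2l.
  have kt : (k < (tr L r).+1)%N.
    rewrite -(ltr_nat R) -natr1; move: hk1; rewrite eL; lra.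
  rewrite /F /ind rn /= ltnS.
  have -> : (n <= r + tr L r)%N by clearbody k; clear -kt hr1 rn; lia.
  rewrite mulr1 lef_pV2 ?posrE //.
  by rewrite -natr1 eD; lra.
rewrite sumr_const_nat.
have -> : (n.+1 - (n - k))%N = k.+1 by clearbody k; clear -k2n; lia.
rewrite -[X in _ <= X]mulr_natr -[k.+1%:R]natr1 [X in _ <= X]mulrC.
exact: (ar3 e0 e4 epsl hk2 D0).
Qed.
End Comb.

Section Fin.
Context {R : realType}.

Lemma tangent (x y : R) n : 0 <= x -> 0 <= y ->
  y ^+ n.+1 + n.+1%:R * y ^+ n * (x - y) <= x ^+ n.+1.
Proof.
move=> x0 y0; elim: n => [|n IH].
  by rewrite !expr1 expr0 mulr1 mul1r addrC subrK.
set Q := y ^+ n.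
have Q0 : 0 <= Q by rewrite exprn_ge0.
have e1 : x ^+ n.+2 = x * x ^+ n.+1 by rewrite exprS.
have e2 : y ^+ n.+2 = y * (y * Q) by rewrite !exprS.
have e3 : y ^+ n.+1 = y * Q by rewrite exprS.
rewrite e1 e2 e3; rewrite e3 in IH.
have h1 : x * (y * Q + n.+1%:R * Q * (x - y)) <= x * x ^+ n.+1 by rewrite ler_wpM2l.
have h2 : 0 <= Q * (n.+1%:R * ((x - y) * (x - y))).
  by rewrite mulr_ge0 // mulr_ge0 // -expr2 sqr_ge0.
have e4 : x * (y * Q + n.+1%:R * Q * (x - y)) - (y * (y * Q) + n.+2%:R * (y * Q) * (x - y))
   = Q * (n.+1%:R * ((x - y) * (x - y))).
  have -> : n.+2%:R = n.+1%:R + 1 :> R by rewrite -natr1.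
  ring.
apply: le_trans h1; rewrite -subr_ge0 e4; exact: h2.
Qed.

Lemma jensen_like (x : nat -> R) Rr y d : (0 < d)%N -> 0 < y -> (forall r, 0 <= x r) ->
  (0 < Rr)%N -> avg1 Rr (fun r => x r ^+ d) < y ^+ d -> avg1 Rr x <= y.
Proof.
case: d => // d _ y0 x0 R0.
rewrite /avg1 -![_ *: _]/(_ * _) => h.
rewrite leNgt; apply/negP => hx.
have Rp : 0 < (Rr%:R : R) by rewrite ltr0n.
set Sx := \sum_(1 <= i < Rr.+1) x i.
set Sd := \sum_(1 <= i < Rr.+1) x i ^+ d.+1.
have hd : Sd < Rr%:R * y ^+ d.+1.
  by move: h; rewrite -/Sd mulrC -ltr_pdivlMr ?invr_gt0 // invrK mulrC.
have hs : Rr%:R * y < Sx.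
  by move: hx; rewrite -/Sx mulrC -ltr_pdivrMr ?invr_gt0 // invrK mulrC.
have := ler_sum_nat (fun r _ => @tangent (x r) y d (x0 r) (ltW y0)) (m := 1%N) (n := Rr.+1).
rewrite big_split /= -mulr_sumr sumrB !sumr_const_nat subn1 /= -/Sx -/Sd.
set P := d.+1%:R * y ^+ d.
have P0 : 0 < P by rewrite mulr_gt0 // ?exprn_gt0 // ltr0n.
have e1 : y ^+ d.+1 *+ Rr = Rr%:R * y ^+ d.+1 by rewrite mulr_natl.
have e2 : y *+ Rr = Rr%:R * y by rewrite mulr_natl.
rewrite e1 e2.
have hm : 0 < P * (Sx - Rr%:R * y) by rewrite mulr_gt0 // subr_gt0.
move=> key.
lra.
Qed.
End Fin.

Unset Implicit Arguments.

Theorem lemma3p3 (R : realType) (H : set (R -> R)) (V : normedModType R)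
  (d : nat) (A : nat -> nat -> V) (L : R -> R) (C : R) :
  standing_hardy H ->
  (0 < d)%N ->
  (forall Rr n, `|A Rr n| <= 1) ->
  H L ->
  ev (fun t => 0 < L t) ->
  prec (fun _ => 1) L ->
  prec L (fun t => t) ->
  0 < C ->
  (limn_esup (fun Rr : nat =>
     ((avg1 Rr (fun r => `|avg_window L r (A Rr)| ^+ d)) : R)%:E) <= C%:E)%E ->
  (limn_esup (fun Rr : nat => (`|avg1 Rr (A Rr)|)%:E) <= (C `^ (d%:R^-1))%:E)%E.
Proof.
move=> hS d0 hA HL hLpos h1L hLt C0 hlim.
have hH : hardy_field H by case: hS.
set c := C `^ (d%:R^-1).
have c0 : 0 <= c by exact: powR_ge0.
have dn0 : (d%:R : R) != 0 by rewrite pnatr_eq0 -lt0n.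
have cd : c ^+ d = C.
  by rewrite /c -powR_mulrn ?powR_ge0 // -powRrM mulVf // powRr1 // ltW.
apply/lee_addgt0Pr => ep ep0.
set y := c + ep / 2.
have y0 : 0 < y by rewrite /y; lra.
have yd : C < y ^+ d by rewrite -cd ltrXn2r // -?lt0n //; rewrite /y; lra.
have [N1 hN1] := esup_lt_ev (le_lt_trans hlim (yd : (C%:E < (y ^+ d)%:E)%E)).
set eps := minr (1/4) (ep/32).
have eps0 : 0 < eps by rewrite lt_min; apply/andP; split; lra.
have eps4 : eps <= 1/4 by rewrite ge_min lexx.
have eps32 : eps <= ep/32 by rewrite ge_min lexx orbT.
have [T1 hT1] := lipschitz hH HL hLt eps0.
have [T2 hT2] : exists T2, forall x, T2 < x -> `|1 / L x| < eps.
  by move/cvgr0Pnorm_lt: h1L => /(_ eps eps0) /evP [T2 h]; exists T2 => x /h.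
have /evP [T3 hT3] := hLpos.
have [T4 hT4] : exists T4, forall x, T4 < x -> `|L x / x| < 1/2.
  move/cvgr0Pnorm_lt: hLt => /(_ (1/2)) h.
  have : 0 < 1/2 :> R by lra.
  by move=> /h /evP [T4 h']; exists T4 => x /h'.
set T := maxr (maxr T1 T2) (maxr (maxr T3 T4) 0).
have T1T : T1 <= T by rewrite /T !le_max lexx.
have T2T : T2 <= T by rewrite /T !le_max lexx !orbT.
have T3T : T3 <= T by rewrite /T !le_max lexx !orbT.
have T4T : T4 <= T by rewrite /T !le_max lexx !orbT.
have T0 : 0 <= T by rewrite /T !le_max lexx !orbT.
have hlip : forall x z, T < x -> T < z -> `|L x - L z| <= eps * `|x - z|.
  by move=> x z Tx Ty; apply: hT1; apply: le_lt_trans Tx || apply: le_lt_trans Ty.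
have hx : forall x, T < x -> 1 / eps <= L x /\ 2 * L x <= x.
  move=> x Tx.
  have Lx0 : 0 < L x by apply: hT3; exact: le_lt_trans Tx.
  have x0 : 0 < x by exact: le_lt_trans Tx.
  have h2 := hT2 x (le_lt_trans T2T Tx).
  have h4 := hT4 x (le_lt_trans T4T Tx).
  rewrite ger0_norm ?divr_ge0 ?ltW // ltr_pdivrMr // in h2.
  rewrite ger0_norm ?divr_ge0 ?ltW // ltr_pdivrMr // in h4.
  split; last by lra.
  by rewrite ler_pdivrMr // mulrC ltW.
set r0 := (Num.truncn T).+1.
set N0 := (2 * r0)%N.
set N2 := (Num.truncn (4 * (1 + 2 * N0%:R) / ep)).+1.
have hN2 : 4 * (1 + 2 * N0%:R) / ep < N2%:R.
  by have := leqnn (Num.truncn (4 * (1 + 2 * N0%:R) / ep)); rewrite truncn_le_nat.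
apply: ev_le_esup; exists (maxn (maxn N1 N2) N0) => Rr.
rewrite !geq_max => /andP [/andP [hR1 hR2] hR0].
have R0 : (0 < Rr)%N by apply: leq_trans hR0; rewrite /N0 muln_gt0.
have RP : 0 < (Rr%:R : R) by rewrite ltr0n.
have Tr0 : T < r0%:R by have := leqnn (Num.truncn T); rewrite truncn_le_nat.
have hL0 : forall r, (r0 <= r)%N -> 0 <= L r%:R.
  move=> r hr; have Tr : T < r%:R by apply: (lt_le_trans Tr0); rewrite ler_nat.
  have [h _] := hx r%:R Tr.
  by apply: le_trans h; rewrite divr_ge0 // ltW.
have hc : forall n, (N0 <= n <= Rr)%N -> 1 - 4 * eps <=
     \sum_(r0 <= r < Rr.+1) ((tr L r).+1%:R)^-1 * ind r (r + tr L r).+1 n.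
  by move=> n /andP [h1 h2]; apply: c_lower.
have r0N0 : (r0 <= N0)%N by rewrite /N0 leq_pmull.
have e4 : 0 <= 4 * eps by lra.
have mb := @main_bound R V (A Rr) L r0 N0 Rr (4 * eps) (hA Rr) isT r0N0 hR0 e4 hL0 hc.
have hj : avg1 Rr (fun r => `|avg_window L r (A Rr)| ^+ d) < y ^+ d.
  by have := hN1 Rr hR1; rewrite lte_fin.
have jl := @jensen_like R (fun r => `|avg_window L r (A Rr)|) Rr y d d0 y0
   (fun r => normr_ge0 _) R0 hj.
rewrite -EFinD lee_fin /avg1 normrZ gtr0_norm ?invr_gt0 //.
move: jl; rewrite /avg1 -[_ *: _]/(_ * _).
set S := \sum_(1 <= n < Rr.+1) A Rr n.
set W := \sum_(1 <= r < Rr.+1) `|avg_window L r (A Rr)|.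
move=> jl.
have h1 : Rr%:R^-1 * `|S| <= Rr%:R^-1 * W + Rr%:R^-1 * (1 + 2 * N0%:R) + 8 * eps.
  have e : Rr%:R^-1 * (2 * (4 * eps) * Rr%:R) = 8 * eps.
    by field; rewrite pnatr_eq0 -lt0n.
  rewrite -e -addrA -mulrDr -mulrDr addrA; apply: ler_wpM2l => //.
  by rewrite -addrA; exact: mb.
have h3 : Rr%:R^-1 * (1 + 2 * N0%:R) <= ep / 4.
  rewrite mulrC ler_pdivrMr //.
  have hN2R : (N2%:R : R) <= Rr%:R by rewrite ler_nat.
  move: hN2; rewrite ltr_pdivrMr // => hN2.
  have : N2%:R * ep <= Rr%:R * ep by rewrite ler_pM2r.
  lra.
move: h1 h3 jl eps32; rewrite /y; clear; lra.
Qed.
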